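(* Fix measurable $\pi_0,\pi_1:\mathcal X\to\{0,1\}$ and set $\tau(X)=\mu(X,1)-\mu(X,0)$, $$\mathrm{FNA}^-_{\pi_0\to\pi_1}=E_P\big[\max\{(\pi_0(X)-\pi_1(X))\tau(X),\,0\}\big],$$ $$\mathrm{FNA}^+_{\pi_0\to\pi_1}=E_P\Big[\min\big\{\pi_1(X)(1-\pi_0(X))\mu(X,0)+\pi_0(X)(1-\pi_1(X))(1-\mu(X,0)),\ \pi_1(X)(1-\pi_0(X))(1-\mu(X,1))+\pi_0(X)(1-\pi_1(X))\mu(X,1)\big\}\Big].$$ Then the identified set is exactly the closed interval $\mathcal S(\mathrm{FNA}_{\pi_0\to\pi_1};P)=[\mathrm{FNA}^-_{\pi_0\to\pi_1},\,\mathrm{FNA}^+_{\pi_0\to\pi_1}]$. In particular, for the constant policies $\pi_0\equiv0,\pi_1\equiv1$, the identified set of $\mathrm{FNA}=\mathbb P(Y(0)=1,Y(1)=0)$ is $[-E_P[\min\{\tau(X),0\}],\ E_P[\min\{\mu(X,0),1-\mu(X,1)\}]]$.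
   Context: Let $\mathcal X$ be a measurable covariate space. A full (unobservable) distribution $\mathbb P$ is a law of $(X,A,Y(0),Y(1))$ with $X\in\mathcal X$, $A\in\{0,1\}$, $Y(0),Y(1)\in\{0,1\}$. The coarsening map $\mathcal C(x,a,y_0,y_1)=(x,a,ay_1+(1-a)y_0)$ induces the observed-data distribution $P=\mathbb P\circ\mathcal C^{-1}$ of $(X,A,Y)$, where $Y=Y(A)$. Write $e(X)=P(A=1\mid X)$ and assume overlap: $e(X)\in(0,1)$ a.s. Let $\mu(X,a)=E_P[Y\mid X,A=a]$. For policies $\pi_0,\pi_1:\mathcal X\to\{0,1\}$, define $\mathrm{FNA}_{\pi_0\to\pi_1}(\mathbb P)=\mathbb P\big(Y(\pi_0(X))=1,\,Y(\pi_1(X))=0\big)$. For a parameter $\psi(\mathbb P)$ its identified set is $\mathcal S(\psi;P)=\{\psi(\mathbb P):\ \mathbb P\circ\mathcal C^{-1}=P,\ \mathbb P(A=1\mid X)=\mathbb P(A=1\mid X,Y(a))\text{ for }a=0,1\}$ (the last condition is unconfoundedness). *)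

(* Defs.v *)
From HB Require Import structures.
From mathcomp Require Import all_boot all_order all_algebra.
From mathcomp Require Import all_classical all_reals all_analysis.
Set Implicit Arguments. Unset Strict Implicit. Unset Printing Implicit Defensive.
Import Order.TTheory GRing.Theory Num.Theory.
Local Open Scope classical_set_scope.
Local Open Scope ring_scope.

Section FNA.
Context (d : measure_display) (T : measurableType d) (R : realType).

(* Observed law of (X,A,Y): X-marginal mu and conditional pmf
   p x a y = P(A=a, Y=y | X=x). *)
Definition obs_kernel (p : T -> bool -> bool -> R) : Prop :=
  (forall a y, measurable_fun setT (fun x => p x a y)) /\
  (forall x a y, 0 <= p x a y) /\
  (forall x, \sum_(a : bool) \sum_(y : bool) p x a y = 1).

(* Full law of (X,A,Y(0),Y(1)): X-marginal mu and conditional pmf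
   q x a y0 y1 = PP(A=a, Y(0)=y0, Y(1)=y1 | X=x). *)
Definition full_kernel (q : T -> bool -> bool -> bool -> R) : Prop :=
  (forall a y0 y1, measurable_fun setT (fun x => q x a y0 y1)) /\
  (forall x a y0 y1, 0 <= q x a y0 y1) /\
  (forall x, \sum_(a : bool) \sum_(y0 : bool) \sum_(y1 : bool) q x a y0 y1 = 1).

Definition pot (y0 y1 b : bool) : bool := if b then y1 else y0.

Definition coarsen (q : T -> bool -> bool -> bool -> R) (x : T) (a y : bool) : R :=
  \sum_(y0 : bool) \sum_(y1 : bool)
     (q x a y0 y1 * ((pot y0 y1 a == y) : bool)%:R).

Definition full_e (q : T -> bool -> bool -> bool -> R) (x : T) : R :=
  \sum_(y0 : bool) \sum_(y1 : bool) q x true y0 y1.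
Definition full_Y (q : T -> bool -> bool -> bool -> R) (x : T) (b y : bool) : R :=
  \sum_(a : bool) \sum_(y0 : bool) \sum_(y1 : bool)
     (q x a y0 y1 * ((pot y0 y1 b == y) : bool)%:R).
Definition full_AY (q : T -> bool -> bool -> bool -> R) (x : T) (b y : bool) : R :=
  \sum_(y0 : bool) \sum_(y1 : bool)
     (q x true y0 y1 * ((pot y0 y1 b == y) : bool)%:R).

(* unconfoundedness PP(A=1|X) = PP(A=1|X,Y(b)) a.s., b = 0,1:
   on every atom {Y(b)=y} of positive conditional probability. *)
Definition unconfounded (mu : probability T R) (q : T -> bool -> bool -> bool -> R) : Prop :=
  {ae mu, forall x, forall b y : bool,
     0 < full_Y q x b y -> full_AY q x b y / full_Y q x b y = full_e q x}.

Definition FNA (mu : probability T R) (q : T -> bool -> bool -> bool -> R)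
  (pi0 pi1 : T -> bool) : \bar R :=
  (\int[mu]_x (\sum_(a : bool) \sum_(y0 : bool) \sum_(y1 : bool)
     (q x a y0 y1 * (pot y0 y1 (pi0 x) && ~~ pot y0 y1 (pi1 x) : bool)%:R))%:E)%E.

Definition ident_set (mu : probability T R) (p : T -> bool -> bool -> R)
  (pi0 pi1 : T -> bool) : set (\bar R) :=
  [set FNA mu q pi0 pi1 | q in
     [set q | full_kernel q /\
              {ae mu, forall x, forall a y : bool, coarsen q x a y = p x a y} /\
              unconfounded mu q]].

Definition e_obs (p : T -> bool -> bool -> R) (x : T) : R := p x true false + p x true true.
Definition mu_obs (p : T -> bool -> bool -> R) (x : T) (a : bool) : R :=
  p x a true / (p x a false + p x a true).
Definition tau (p : T -> bool -> bool -> R) (x : T) : R :=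
  mu_obs p x true - mu_obs p x false.

Definition FNA_lo (mu : probability T R) (p : T -> bool -> bool -> R)
  (pi0 pi1 : T -> bool) : \bar R :=
  (\int[mu]_x (Num.max (((pi0 x)%:R - (pi1 x)%:R) * tau p x) 0)%:E)%E.

Definition FNA_hi (mu : probability T R) (p : T -> bool -> bool -> R)
  (pi0 pi1 : T -> bool) : \bar R :=
  (\int[mu]_x (Num.min
     ((pi1 x)%:R * (1 - (pi0 x)%:R) * mu_obs p x false
        + (pi0 x)%:R * (1 - (pi1 x)%:R) * (1 - mu_obs p x false))
     ((pi1 x)%:R * (1 - (pi0 x)%:R) * (1 - mu_obs p x true)
        + (pi0 x)%:R * (1 - (pi1 x)%:R) * mu_obs p x true))%:E)%E.

End FNA.

(* Main.v *)
Require Import Defs.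
From HB Require Import structures.
From mathcomp Require Import all_boot all_order all_algebra.
From mathcomp Require Import all_classical all_reals all_analysis.
From mathcomp Require Import measurable_realfun lebesgue_integral.
From mathcomp Require Import ring lra.
Set Implicit Arguments. Unset Strict Implicit. Unset Printing Implicit Defensive.
Import Order.TTheory GRing.Theory Num.Theory.
Local Open Scope classical_set_scope.
Local Open Scope ring_scope.

Lemma measurable_inv (R : realType) : measurable_fun [set: R] (@GRing.inv R).
Proof.
have -> : (@GRing.inv R) = (fun x => if x == 0 then 0 else x^-1).
  by apply/funext => x; case: eqP => // ->; rewrite invr0.
apply: measurable_fun_if => //.
- apply: measurable_fun_eqr => //. 
- rewrite setTI.
  have -> : ((fun x : R => x == 0) @^-1` [set false]) = ~` [set 0].
    by apply/seteqP; split => x /=; case: eqP.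
  apply: open_continuous_measurable_fun.
    rewrite openC. apply: accessible_closed_set1; apply: hausdorff_accessible; exact: Rhausdorff.
  move=> x; rewrite inE /= => /eqP x0; exact: inv_continuous.
Qed.

Section Alg.
Variable R : realType.

Lemma ratio01 (a b : R) : 0 <= a -> 0 <= b -> 0 <= b / (a + b) <= 1.
Proof.
move=> a0 b0; have [ab0|ab0] := eqVneq (a + b) 0.
  by rewrite ab0 invr0 mulr0 lexx ler01.
have abp : 0 < a + b by rewrite lt_def ab0 addr_ge0.
rewrite divr_ge0 ?addr_ge0 //= ler_pdivrMr // mul1r; lra.
Qed.

Definition Jr (a0 a1 r : R) (y0 y1 : bool) : R :=
  if y0 then (if y1 then a0 - r else r) else (if y1 then a1 - a0 + r else 1 - a1 - r).

Lemma Jr_ge0 (a0 a1 t : R) y0 y1 : 0 <= a0 <= 1 -> 0 <= a1 <= 1 -> 0 <= t <= 1 ->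
  0 <= Jr a0 a1 (Num.max (a0 - a1) 0 + t * (Num.min a0 (1 - a1) - Num.max (a0 - a1) 0)) y0 y1.
Proof.
move=> /andP[? ?] /andP[? ?] /andP[t0 t1].
set lo := Num.max _ _; set hi := Num.min _ _.
have h1 : 0 <= lo by rewrite le_max lexx orbT.
have h2 : a0 - a1 <= lo by rewrite le_max lexx.
have h3 : hi <= a0 by rewrite ge_min lexx.
have h4 : hi <= 1 - a1 by rewrite ge_min lexx orbT.
have h5 : lo <= hi by rewrite ge_max !le_min; apply/andP; split; apply/andP; split; lra.
have h6 : 0 <= t * (hi - lo) by rewrite mulr_ge0 // subr_ge0.
have h7 : 0 <= (1 - t) * (hi - lo) by rewrite mulr_ge0 // subr_ge0.
case: y0; case: y1 => /=; nra.
Qed.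

End Alg.

Section Main.
Context (d : measure_display) (T : measurableType d) (R : realType)
  (p : T -> bool -> bool -> R) (pK : obs_kernel p).

Definition m0 x := mu_obs p x false.
Definition m1 x := mu_obs p x true.
Definition rlo x := Num.max (m0 x - m1 x) 0.
Definition rhi x := Num.min (m0 x) (1 - m1 x).
Definition qt (t : R) x (a y0 y1 : bool) :=
  (p x a false + p x a true) * Jr (m0 x) (m1 x) (rlo x + t * (rhi x - rlo x)) y0 y1.

Lemma p_ge0 x a y : 0 <= p x a y. Proof. by case: pK => _ [] . Qed.

Lemma p_sum x : p x true true + p x true false + (p x false true + p x false false) = 1.
Proof. by case: pK => _ [] _ /(_ x); rewrite !big_bool. Qed.

Lemma mu_obs01 x a : 0 <= mu_obs p x a <= 1.
Proof. exact: ratio01 (p_ge0 _ _ _) (p_ge0 _ _ _). Qed.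

Lemma qt_ge0 t x a y0 y1 : 0 <= t <= 1 -> 0 <= qt t x a y0 y1.
Proof.
move=> t01; rewrite /qt mulr_ge0 ?addr_ge0 ?p_ge0 //.
exact: Jr_ge0 (mu_obs01 _ _) (mu_obs01 _ _) t01.
Qed.

Lemma qt_sum t x : \sum_(a : bool) \sum_(y0 : bool) \sum_(y1 : bool) qt t x a y0 y1 = 1.
Proof.
rewrite -(p_sum x) !big_bool /qt /Jr /=; ring.
Qed.

Lemma qt_coarsen t x a y : 0 < e_obs p x < 1 -> coarsen (qt t) x a y = p x a y.
Proof.
move=> /andP[e0 e1].
have hs := p_sum x.
have ep : 0 < p x a false + p x a true.
  by case: a; rewrite /e_obs in e0 e1 *; lra.
transitivity ((p x a false + p x a true) * (if y then mu_obs p x a else 1 - mu_obs p x a)).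
  rewrite /coarsen /qt !big_bool /Jr /m0 /m1 /=.
  by clear ep; case: a; case: y => /=; ring.
rewrite /mu_obs; have ne : p x a false + p x a true != 0 by rewrite gt_eqF.
case: y; field => //.
Qed.

Definition Mg t x b y := \sum_(y0 : bool) \sum_(y1 : bool)
  (Jr (m0 x) (m1 x) (rlo x + t * (rhi x - rlo x)) y0 y1 * ((pot y0 y1 b == y) : bool)%:R).

Lemma qt_unconf (mu : probability T R) t : unconfounded mu (qt t).
Proof.
apply: aeW => x b y.
have hs := p_sum x.
have hY : full_Y (qt t) x b y = Mg t x b y.
  transitivity ((p x true true + p x true false + (p x false true + p x false false)) * Mg t x b y).
    rewrite /full_Y /Mg /qt !big_bool /=; ring.
  by rewrite hs mul1r.
have hAY : full_AY (qt t) x b y = (p x true false + p x true true) * Mg t x b y.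
  rewrite /full_AY /Mg /qt !big_bool /=; ring.
have he : full_e (qt t) x = p x true false + p x true true.
  rewrite /full_e /qt !big_bool /Jr /=; ring.
rewrite hY hAY he => Mp; rewrite mulfK // gt_eqF //.
Qed.

Definition fq (q : T -> bool -> bool -> bool -> R) (pi0 pi1 : T -> bool) x :=
  \sum_(a : bool) \sum_(y0 : bool) \sum_(y1 : bool)
     (q x a y0 y1 * (pot y0 y1 (pi0 x) && ~~ pot y0 y1 (pi1 x) : bool)%:R).

Definition rt t x := rlo x + t * (rhi x - rlo x).

Lemma fq_qt_val t pi0 pi1 x : fq (qt t) pi0 pi1 x =
  if pi0 x == pi1 x then 0 else if pi1 x then rt t x else m1 x - m0 x + rt t x.
Proof.
have hs := p_sum x.
transitivity ((p x true true + p x true false + (p x false true + p x false false)) *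
  \sum_(y0 : bool) \sum_(y1 : bool) (Jr (m0 x) (m1 x) (rt t x) y0 y1 *
     (pot y0 y1 (pi0 x) && ~~ pot y0 y1 (pi1 x) : bool)%:R)).
  rewrite /fq /qt /rt !big_bool /=; ring.
rewrite hs mul1r !big_bool /Jr /=.
by case: (pi0 x); case: (pi1 x) => /=; ring.
Qed.

Lemma fq_qt_affine t pi0 pi1 x :
  fq (qt t) pi0 pi1 x = fq (qt 0) pi0 pi1 x + t * (fq (qt 1) pi0 pi1 x - fq (qt 0) pi0 pi1 x).
Proof.
rewrite !fq_qt_val /rt; case: (pi0 x == pi1 x); case: (pi1 x); ring.
Qed.

Lemma lo_eq (pi0 pi1 : T -> bool) x :
  Num.max (((pi0 x)%:R - (pi1 x)%:R) * tau p x) 0 = fq (qt 0) pi0 pi1 x.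
Proof.
rewrite fq_qt_val /rt /rlo /tau /m0 /m1.
case: (pi0 x); case: (pi1 x) => /=; rewrite ?mulr0n ?mulr1n ?subrr ?mul0r ?maxxx ?addr0 //;
  case: leP => ?; case: leP => ?; lra.
Qed.

Lemma hi_eq (pi0 pi1 : T -> bool) x :
  Num.min
     ((pi1 x)%:R * (1 - (pi0 x)%:R) * mu_obs p x false
        + (pi0 x)%:R * (1 - (pi1 x)%:R) * (1 - mu_obs p x false))
     ((pi1 x)%:R * (1 - (pi0 x)%:R) * (1 - mu_obs p x true)
        + (pi0 x)%:R * (1 - (pi1 x)%:R) * mu_obs p x true) = fq (qt 1) pi0 pi1 x.
Proof.
rewrite fq_qt_val /rt /rhi /m0 /m1.
case: (pi0 x); case: (pi1 x) => /=; rewrite ?(mulr0n, mulr1n, subrr, mul0r, mulr0, mul1r, subr0, addr0, add0r, minxx) //;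
  first [ ring | case: leP => ?; case: leP => ?; lra ].
Qed.

Lemma unc_lin (Y A e : R) : 0 <= A -> A <= Y -> (0 < Y -> A / Y = e) -> A = e * Y.
Proof.
move=> A0 AY h; have [Y0|Y0] := eqVneq Y 0.
  by rewrite Y0 mulr0; apply/eqP; rewrite eq_le A0 -Y0 AY.
have Yp : 0 < Y by rewrite lt_def Y0 (le_trans A0 AY).
by rewrite -(h Yp) divfK.
Qed.

Lemma mu_mul x a : (p x a false + p x a true) * mu_obs p x a = p x a true.
Proof.
rewrite /mu_obs; have [E0|E0] := eqVneq (p x a false + p x a true) 0.
  rewrite E0 mul0r; apply/esym/eqP; rewrite eq_le p_ge0 andbT.
  by have := p_ge0 x a false; lra.
by rewrite mulrC divfK.
Qed.

Ltac norm01 := rewrite ?(mulr1n, mulr0n, mulr1, mulr0, addr0, add0r).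

Lemma fq_bounds (q : T -> bool -> bool -> bool -> R) (pi0 pi1 : T -> bool) x :
  0 < e_obs p x < 1 ->
  (forall a y0 y1, 0 <= q x a y0 y1) ->
  \sum_(a : bool) \sum_(y0 : bool) \sum_(y1 : bool) q x a y0 y1 = 1 ->
  (forall a y, coarsen q x a y = p x a y) ->
  (forall b y, 0 < full_Y q x b y -> full_AY q x b y / full_Y q x b y = full_e q x) ->
  fq (qt 0) pi0 pi1 x <= fq q pi0 pi1 x <= fq (qt 1) pi0 pi1 x.
Proof.
rewrite /e_obs => /andP[e0 e1] hq0 hqs hc hu.
have hs := p_sum x.
have c10 := hc true false; have c11 := hc true true.
have c00 := hc false false; have c01 := hc false true.
rewrite /coarsen !big_bool /= in c10 c11 c00 c01; norm01.
norm01; rewrite ?(mulr1n, mulr0n, mulr1, mulr0, addr0, add0r) in c10 c11 c00 c01.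
have q000 := hq0 false false false; have q001 := hq0 false false true.
have q010 := hq0 false true false; have q011 := hq0 false true true.
have q100 := hq0 true false false; have q101 := hq0 true false true.
have q110 := hq0 true true false; have q111 := hq0 true true true.
rewrite !big_bool /= in hqs.
have he : full_e q x = p x true false + p x true true.
  rewrite /full_e !big_bool /=; lra.
have hA1 : full_AY q x true true = p x true true.
  rewrite /full_AY !big_bool /=; norm01; lra.
have hA0 : full_AY q x false true + p x false true = full_Y q x false true.
  rewrite /full_AY /full_Y !big_bool /=; norm01; lra.
have u1 : full_AY q x true true = (p x true false + p x true true) * full_Y q x true true.
  rewrite -he; apply: unc_lin; last exact: hu.
    rewrite /full_AY !big_bool /=; norm01; lra.
  rewrite /full_AY /full_Y !big_bool /=; norm01; lra.
have u0 : full_AY q x false true = (p x true false + p x true true) * full_Y q x false true.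
  rewrite -he; apply: unc_lin; last exact: hu.
    rewrite /full_AY !big_bool /=; norm01; lra.
  rewrite /full_AY /full_Y !big_bool /=; norm01; lra.
have M1 : full_Y q x true true = mu_obs p x true.
  have ne : p x true false + p x true true != 0 by rewrite gt_eqF.
  by apply: (mulfI ne); rewrite mu_mul -u1 hA1.
have M0 : full_Y q x false true = mu_obs p x false.
  have ne : p x false false + p x false true != 0 by rewrite gt_eqF //; lra.
  apply: (mulfI ne); rewrite mu_mul.
  rewrite (_ : p x false false + p x false true = 1 - (p x true false + p x true true)); last lra.
  rewrite mulrBl mul1r -u0; lra.
rewrite /full_Y !big_bool /= in M1 M0; norm01; rewrite ?(mulr1n, mulr0n, mulr1, mulr0, addr0, add0r) in M1 M0.
have /andP[? ?] := mu_obs01 x false; have /andP[? ?] := mu_obs01 x true.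
rewrite !fq_qt_val /rt /rlo /rhi /m0 /m1 /fq !big_bool /=.
case: (pi0 x); case: (pi1 x) => /=; norm01; rewrite ?subrr ?mul0r ?mul1r ?addr0 ?lexx //;
  case: (leP (mu_obs p x false - mu_obs p x true) 0) => ?;
  case: (leP (mu_obs p x false) (1 - mu_obs p x true)) => ?; apply/andP; split; lra.
Qed.

Lemma p_meas a y : measurable_fun setT (fun x => p x a y).
Proof. by case: pK => + _; apply. Qed.

Lemma mu_obs_meas a : measurable_fun setT (fun x => mu_obs p x a).
Proof.
rewrite /mu_obs; apply: measurable_funM; first exact: p_meas.
exact: (measurableT_comp (@measurable_inv R) (measurable_funD (p_meas a false) (p_meas a true))).
Qed.

Lemma rlo_meas : measurable_fun setT rlo.
Proof.
apply: measurable_maxr; last exact: measurable_cst.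
by apply: measurable_funB; exact: mu_obs_meas.
Qed.

Lemma rhi_meas : measurable_fun setT rhi.
Proof.
apply: measurable_minr; first exact: mu_obs_meas.
by apply: measurable_funB; [exact: measurable_cst|exact: mu_obs_meas].
Qed.

Lemma qt_meas t a y0 y1 : measurable_fun setT (fun x => qt t x a y0 y1).
Proof.
have mr : measurable_fun setT (rt t).
  apply: measurable_funD; first exact: rlo_meas.
  apply: measurable_funM; first exact: measurable_cst.
  by apply: measurable_funB; [exact: rhi_meas|exact: rlo_meas].
have m0m : measurable_fun setT m0 by exact: mu_obs_meas.
have m1m : measurable_fun setT m1 by exact: mu_obs_meas.
rewrite /qt; apply: measurable_funM.
  by apply: measurable_funD; exact: p_meas.
rewrite -/(rt t _) /Jr.
case: y0; case: y1.
- exact: measurable_funB.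
- exact: mr.
- by apply: measurable_funD => //; apply: measurable_funB.
- apply: measurable_funB => //; apply: measurable_funB => //; exact: measurable_cst.
Qed.

Lemma ind_meas (pi0 pi1 : T -> bool) (B : bool -> bool -> bool) :
  measurable_fun setT pi0 -> measurable_fun setT pi1 ->
  measurable_fun setT (fun x => (B (pi0 x) (pi1 x))%:R : R).
Proof.
move=> m0 m1.
have -> : (fun x => (B (pi0 x) (pi1 x))%:R : R) =
  (fun x => if pi0 x then (if pi1 x then (B true true)%:R else (B true false)%:R)
            else (if pi1 x then (B false true)%:R else (B false false)%:R)).
  by apply/funext => x; case: (pi0 x); case: (pi1 x).
by apply: measurable_fun_ifT => //; apply: measurable_fun_ifT => //; exact: measurable_cst.
Qed.

Lemma msum_bool (F : bool -> T -> R) : (forall b, measurable_fun setT (F b)) ->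
  measurable_fun setT (fun x => \sum_(b : bool) F b x).
Proof.
move=> h; have -> : (fun x => \sum_(b : bool) F b x) = (fun x => F true x + F false x).
  by apply/funext => x; rewrite big_bool.
exact: measurable_funD.
Qed.

Lemma fq_meas (q : T -> bool -> bool -> bool -> R) (pi0 pi1 : T -> bool) :
  (forall a y0 y1, measurable_fun setT (fun x => q x a y0 y1)) ->
  measurable_fun setT pi0 -> measurable_fun setT pi1 ->
  measurable_fun setT (fq q pi0 pi1).
Proof.
move=> mq m0 m1; rewrite /fq.
apply: msum_bool => a; apply: msum_bool => y0; apply: msum_bool => y1.
apply: measurable_funM; first exact: mq.
exact: (ind_meas (fun b0 b1 => pot y0 y1 b0 && ~~ pot y0 y1 b1)).
Qed.

Lemma fq01 (q : T -> bool -> bool -> bool -> R) (pi0 pi1 : T -> bool) x :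
  (forall a y0 y1, 0 <= q x a y0 y1) ->
  \sum_(a : bool) \sum_(y0 : bool) \sum_(y1 : bool) q x a y0 y1 = 1 ->
  0 <= fq q pi0 pi1 x <= 1.
Proof.
move=> h0 h1; apply/andP; split.
  by apply: sumr_ge0 => a _; apply: sumr_ge0 => y0 _; apply: sumr_ge0 => y1 _;
     rewrite mulr_ge0.
rewrite -h1; apply: ler_sum => a _; apply: ler_sum => y0 _; apply: ler_sum => y1 _.
by case: (_ && _); rewrite /= ?mulr1n ?mulr0n ?mulr1 ?mulr0.
Qed.

End Main.

Section Integ.
Context (d : measure_display) (T : measurableType d) (R : realType)
  (mu : probability T R).
Local Open Scope ereal_scope.

Lemma meE (g : T -> R) : measurable_fun setT g -> measurable_fun setT (fun x => (g x)%:E).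
Proof. by move=> mg; apply/measurable_EFinP. Qed.

Lemma int_fin (g : T -> R) : measurable_fun setT g -> (forall x, (0 <= g x <= 1)%R) ->
  exists v : R, \int[mu]_x (g x)%:E = v%:E /\ (0 <= v)%R.
Proof.
move=> mg h.
have I0 : 0 <= \int[mu]_x (g x)%:E.
  by apply: integral_ge0 => x _; rewrite lee_fin; case/andP: (h x).
have I1 : \int[mu]_x (g x)%:E <= 1.
  have h0 : forall x, [set: T] x -> 0 <= (g x)%:E.
    by move=> x _; rewrite lee_fin; case/andP: (h x).
  have h1 : forall x, [set: T] x -> (g x)%:E <= cst 1 x.
    by move=> x _; rewrite lee_fin; case/andP: (h x).
  have H := @ge0_le_integral _ _ _ mu setT measurableT (fun x => (g x)%:E) (cst 1) h0 (meE mg)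
    (measurable_cst _) h1.
  rewrite integral_cst // mul1e in H.
  apply: (le_trans H); rewrite le_eqVlt; apply/orP; left; apply/eqP; exact: probability_setT.
move: I0 I1; case: (\int[mu]_x (g x)%:E) => [v| |] //= I0 I1.
by exists v; split => //; rewrite -lee_fin.
Qed.

Lemma rlo_le_rhi (p : T -> bool -> bool -> R) (pK : obs_kernel p) x : (rlo p x <= rhi p x)%R.
Proof.
have /andP[? ?] := mu_obs01 pK x false; have /andP[? ?] := mu_obs01 pK x true.
rewrite /rlo /rhi /m0 /m1 ge_max !le_min; apply/andP; split; apply/andP; split; lra.
Qed.

Lemma FNA_qt (p : T -> bool -> bool -> R) (pK : obs_kernel p) (pi0 pi1 : T -> bool) t :
  measurable_fun setT pi0 -> measurable_fun setT pi1 -> (0 <= t <= 1)%R ->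
  \int[mu]_x (fq (qt p t) pi0 pi1 x)%:E =
  \int[mu]_x (fq (qt p 0) pi0 pi1 x)%:E +
  t%:E * \int[mu]_x (fq (qt p 1) pi0 pi1 x - fq (qt p 0) pi0 pi1 x)%:E.
Proof.
move=> mp0 mp1 /andP[t0 t1].
have mq s : measurable_fun setT (fq (qt p s) pi0 pi1).
  by apply: fq_meas => // a y0 y1; exact: qt_meas.
have L0 x : (0 <= fq (qt p 0) pi0 pi1 x)%R.
  have h01 : (0 <= (0:R) <= 1)%R by rewrite lexx ler01.
  by have /andP[] := @fq01 _ _ _ (qt p 0) pi0 pi1 x (fun a y0 y1 => qt_ge0 pK x a y0 y1 h01) (qt_sum pK 0 x).
have D0 x : (0 <= fq (qt p 1) pi0 pi1 x - fq (qt p 0) pi0 pi1 x)%R.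
  rewrite subr_ge0 !fq_qt_val // /rt; have := rlo_le_rhi pK x.
  case: (_ == _); case: (pi1 x) => ?; lra.
rewrite (eq_integral (fun x => (fq (qt p 0) pi0 pi1 x)%:E +
   (t * (fq (qt p 1) pi0 pi1 x - fq (qt p 0) pi0 pi1 x))%:E)); last first.
  by move=> x _; rewrite fq_qt_affine // EFinD.
rewrite ge0_integralD //; first last.
- by apply: meE; apply: measurable_funM; [exact: measurable_cst|apply: measurable_funB].
- by move=> x _; rewrite lee_fin mulr_ge0.
- exact: meE.
- by move=> x _; rewrite lee_fin.
congr (_ + _).
under eq_integral do rewrite EFinM.
rewrite ge0_integralZl_EFin //.
- by move=> x _; rewrite lee_fin.
- by apply: meE; apply: measurable_funB.
Qed.

Lemma part1 (p : T -> bool -> bool -> R) (pK : obs_kernel p)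
  (hae : {ae mu, forall x, (0 < e_obs p x < 1)%R}) (pi0 pi1 : T -> bool) :
  measurable_fun setT pi0 -> measurable_fun setT pi1 ->
  ident_set mu p pi0 pi1 =
  [set z | (FNA_lo mu p pi0 pi1 <= z <= FNA_hi mu p pi0 pi1)%E].
Proof.
move=> mp0 mp1.
have h01 : (0 <= (0:R) <= 1)%R by rewrite lexx ler01.
have h11 : (0 <= (1:R) <= 1)%R by rewrite lexx ler01.
have mq s : measurable_fun setT (fq (qt p s) pi0 pi1).
  by apply: fq_meas => // a y0 y1; exact: qt_meas.
have q01 s x : (0 <= s <= 1)%R -> (0 <= fq (qt p s) pi0 pi1 x <= 1)%R.
  by move=> hs; apply: fq01 (qt_sum pK s x) => a y0 y1; exact: qt_ge0.
have eLo : FNA_lo mu p pi0 pi1 = \int[mu]_x (fq (qt p 0) pi0 pi1 x)%:E.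
  by apply: eq_integral => x _; rewrite lo_eq.
have eHi : FNA_hi mu p pi0 pi1 = \int[mu]_x (fq (qt p 1) pi0 pi1 x)%:E.
  by apply: eq_integral => x _; rewrite hi_eq.
have [l [El l0]] := int_fin (mq 0%R) (fun x => q01 0%R x h01).
have D01 x : (0 <= fq (qt p 1) pi0 pi1 x - fq (qt p 0) pi0 pi1 x <= 1)%R.
  have /andP[H H0] := q01 0%R x h01; have /andP[H1 H2] := q01 1%R x h11.
  have := rlo_le_rhi pK x.
  rewrite !fq_qt_val // /rt in H H0 H1 H2 *.
  by move: H H0 H1 H2; case: (_ == _); case: (pi1 x) => ? ? ? ? ?; apply/andP; split; lra.
have [dd [Ed d0]] := int_fin (measurable_funB (mq 1%R) (mq 0%R)) D01.
have Ft t : (0 <= t <= 1)%R -> FNA mu (qt p t) pi0 pi1 = (l + t * dd)%:E.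
  by move=> ht; rewrite /FNA (FNA_qt pK) // El Ed -EFinM -EFinD.
have eH : FNA_hi mu p pi0 pi1 = (l + dd)%:E.
  by rewrite eHi -(mul1r dd) -(Ft 1%R h11).
rewrite eH eLo El; apply/seteqP; split.
- move=> _ [q [qK [qc qu]] <-].
  case: qK => qm [q0 qs].
  have H : {ae mu, forall x, [set: T] x ->
     (fq (qt p 0) pi0 pi1 x <= fq q pi0 pi1 x <= fq (qt p 1) pi0 pi1 x)%R}.
    have Hcu := filterS2 (ae_filter_ringOfSetsType mu) (fun x (a : forall a y, coarsen q x a y = p x a y)
      (b : forall b y, (0 < full_Y q x b y)%R -> (full_AY q x b y / full_Y q x b y)%R = full_e q x) => conj a b) qc qu.
    apply: (filterS2 (ae_filter_ringOfSetsType mu) _ hae Hcu) => x he [hc hu] _.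
    exact: fq_bounds.
  have mfq : measurable_fun setT (fq q pi0 pi1) by exact: fq_meas.
  have fq0 x : (0 <= fq q pi0 pi1 x)%R by have /andP[] := fq01 pi0 pi1 (q0 x) (qs x).
  apply/andP; split.
  + rewrite -El; apply: ae_ge0_le_integral => //.
    * by move=> x _; rewrite lee_fin; have /andP[] := q01 0%R x h01.
    * exact: meE.
    * by move=> x _; rewrite lee_fin; exact: fq0.
    * exact: meE.
    * by apply: filterS H => x h hx; rewrite lee_fin; case/andP: (h hx).
  + rewrite -eH eHi; apply: ae_ge0_le_integral => //.
    * by move=> x _; rewrite lee_fin; exact: fq0.
    * exact: meE.
    * by move=> x _; rewrite lee_fin; have /andP[] := q01 1%R x h11.
    * exact: meE.
    * by apply: filterS H => x h hx; rewrite lee_fin; case/andP: (h hx).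
- move=> z /andP[]; case: z => [zz| |] //= lz zh.
  rewrite lee_fin in lz; rewrite lee_fin in zh.
  pose t := if dd == 0%R then 0%R else ((zz - l) / dd)%R.
  have ht : (0 <= t <= 1)%R.
    rewrite /t; case: eqP => [//|/eqP dn].
    have dp : (0 < dd)%R by rewrite lt_def dn d0.
    by rewrite divr_ge0 ?subr_ge0 //= ler_pdivrMr // mul1r; lra.
  have hz : (l + t * dd)%R = zz.
    rewrite /t; case: eqP => [d00|/eqP dn].
      by rewrite d00 addr0 in zh *; rewrite mul0r addr0; apply/eqP; rewrite eq_le lz zh.
    by rewrite divfK // addrC subrK.
  exists (qt p t); last by rewrite Ft // hz.
  split; [split; [|split]|split].
  + by move=> a y0 y1; exact: qt_meas.
  + by move=> x a y0 y1; exact: qt_ge0.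
  + by move=> x; exact: qt_sum.
  + by apply: filterS hae => x hx a y; exact: qt_coarsen.
  + exact: qt_unconf.
Qed.

End Integ.

Unset Implicit Arguments.

Theorem theorem2 (d : measure_display) (T : measurableType d) (R : realType)
  (mu : probability T R) (p : T -> bool -> bool -> R) :
  obs_kernel p ->
  {ae mu, forall x, 0 < e_obs p x < 1} ->
  (forall pi0 pi1 : T -> bool,
      measurable_fun setT pi0 -> measurable_fun setT pi1 ->
      ident_set mu p pi0 pi1 =
      [set z | (FNA_lo mu p pi0 pi1 <= z <= FNA_hi mu p pi0 pi1)%E]) /\
  ident_set mu p (fun _ => false) (fun _ => true) =
  [set z | (- (\int[mu]_x (Num.min (tau p x) 0)%:E) <= z
            <= \int[mu]_x (Num.min (mu_obs p x false) (1 - mu_obs p x true))%:E)%E].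
Proof.
move=> pK hae; split.
  by move=> pi0 pi1 m0 m1; exact: part1.
rewrite (@part1 _ _ _ mu p pK hae (fun _ => false) (fun _ => true)); last first.
- exact: measurable_cst.
- exact: measurable_cst.
have E1 : FNA_lo mu p (fun _ => false) (fun _ => true) =
          (- \int[mu]_x (Num.min (tau p x) 0)%:E)%E.
  rewrite /FNA_lo.
  rewrite (eq_integral (fun x => (- Num.min (tau p x) 0)%:E)); last first.
    move=> x _; congr (_%:E); rewrite /= mulr0n mulr1n sub0r mulN1r.
    by case: (leP (tau p x) 0) => h; case: (leP (- tau p x) 0) => h'; lra.
  rewrite (eq_integral (fun x => (- (- Num.min (tau p x) 0)%:E)%E)
     (fun x => (Num.min (tau p x) 0)%:E)); last by move=> x _; rewrite EFinN oppeK.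
  rewrite integral_ge0N ?oppeK //.
  by move=> x _; rewrite lee_fin oppr_ge0 ge_min lexx orbT.
have E2 : FNA_hi mu p (fun _ => false) (fun _ => true) =
          (\int[mu]_x (Num.min (mu_obs p x false) (1 - mu_obs p x true))%:E)%E.
  apply: eq_integral => x _; congr (_%:E); congr (Num.min _ _); rewrite /=; ring.
by rewrite E1 E2.
Qed.
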